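(* Let $X$ be a Banach space and let $R:\Omega\to L(X)$ be a pseudo-resolvent which satisfies condition $\mathbf{(G_{k_0})}$ for some integer $k_0\ge1$. Then $$\ker R(\mu)^{k+1}=\ker R(\mu)^{k_0}\quad\text{and}\quad\overline{{\rm ran}\,R(\mu)^{k+1}}=\overline{{\rm ran}\,R(\mu)^{k_0}}$$ for all $\mu\in\Omega$ and all $k\ge k_0$.
   Context: Let $\Omega\subset\mathbb{C}$ be open. A map $R:\Omega\to L(X)$ is a pseudo-resolvent if $\frac{R(\lambda)-R(\mu)}{\mu-\lambda}=R(\lambda)R(\mu)$ for all $\lambda,\mu\in\Omega$ with $\lambda\neq\mu$. Condition $\mathbf{(G_k)}$ (for an integer $k\ge1$): there exist $M>0$ and a sequence $(\lambda_n)_{n\ge1}$ in $\Omega\cap\mathbb{R}$ with $\lambda_n\to\infty$ and $\|\lambda_n^{2-k}R(\lambda_n)\|\le M$ for all $n\ge1$. *)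

(* Defs.v *)
(* Complex Banach space = CompleteNormedModule C_AbsRing. *)
From Stdlib Require Import Reals.
From Coquelicot Require Import Coquelicot.
Open Scope R_scope.

Section Defs.
Context {X : CompleteNormedModule C_AbsRing}.

Definition is_bounded_linear (T : X -> X) : Prop :=
  (forall x y : X, T (plus x y) = plus (T x) (T y)) /\
  (forall (a : C) (x : X), T (scal a x) = scal a (T x)) /\
  (exists c : R, forall x : X, norm (T x) <= c * norm x).

Definition pseudo_resolvent (Omega : C -> Prop) (Rf : C -> X -> X) : Prop :=
  (forall l : C, Omega l -> is_bounded_linear (Rf l)) /\
  (forall l m : C, Omega l -> Omega m -> l <> m ->
     forall x : X,
       scal (Cinv (Cminus m l)) (minus (Rf l x) (Rf m x)) = Rf l (Rf m x)).

(* Condition (G_k): there exist M > 0 and real λ_n ∈ Ω with λ_n -> +oo and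
   ||λ_n^(2-k) R(λ_n)|| <= M (operator norm bound written pointwise). *)
Definition cond_G (Omega : C -> Prop) (Rf : C -> X -> X) (k : nat) : Prop :=
  exists (M : R) (lam : nat -> R),
    0 < M /\
    (forall n, Omega (RtoC (lam n))) /\
    (forall n, 0 < lam n) /\
    is_lim_seq lam p_infty /\
    (forall n (x : X),
       norm (scal (RtoC (powerRZ (lam n) (2 - Z.of_nat k)%Z)) (Rf (RtoC (lam n)) x))
         <= M * norm x).

Definition op_pow (T : X -> X) (n : nat) : X -> X := fun x => Nat.iter n T x.

Definition op_ker (T : X -> X) : X -> Prop := fun x => T x = zero.
Definition op_ran (T : X -> X) : X -> Prop := fun y => exists x, T x = y.

Definition nclosure (A : X -> Prop) : X -> Prop :=
  fun x => forall eps : R, 0 < eps -> exists y, A y /\ norm (minus x y) < eps.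

End Defs.

(* Main.v *)
From Stdlib Require Import Reals Lra Lia.
From Coquelicot Require Import Coquelicot.
Require Import Defs.
Open Scope R_scope.
Section XL.
Context {X : CompleteNormedModule C_AbsRing}.
Lemma scal_opp_rX (k : C) (u : X) : scal k (opp u) = opp (scal k u).
Proof. exact (scal_opp_r _ _). Qed.
Lemma scal_opp_lX (k : C) (u : X) : scal (Copp k) u = opp (scal k u).
Proof. exact (scal_opp_l _ _). Qed.
Lemma scal_assocX (a b : C) (u : X) : scal a (scal b u) = scal (Cmult a b) u.
Proof. exact (scal_assoc _ _ _). Qed.
Lemma scal_oneX (u : X) : scal (RtoC 1) u = u.
Proof. exact (scal_one _). Qed.
Lemma scal_zeroX (u : X) : scal (RtoC 0) u = zero.
Proof. exact (scal_zero_l _). Qed.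
Lemma scal_zero_rX (k : C) : scal k (zero : X) = zero.
Proof. exact (scal_zero_r _). Qed.
Lemma opp_oppX (u : X) : opp (opp u) = u.
Proof. exact (opp_opp _). Qed.
Lemma opp_minusX (u v : X) : opp (minus u v) = minus v u.
Proof. exact (opp_minus _ _). Qed.
Lemma plus_commX (u v : X) : plus u v = plus v u.
Proof. exact (plus_comm _ _). Qed.
Lemma plus_assocX (u v w : X) : plus u (plus v w) = plus (plus u v) w.
Proof. exact (plus_assoc _ _ _). Qed.
Lemma plus_opp_rX (u : X) : plus u (opp u) = zero.
Proof. exact (plus_opp_r _). Qed.
Lemma plus_zero_rX (u : X) : plus u zero = u.
Proof. exact (plus_zero_r _). Qed.
Lemma plus_zero_lX (u : X) : plus zero u = u.
Proof. exact (plus_zero_l _). Qed.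
Lemma minusX (u v : X) : minus u v = plus u (opp v).
Proof. reflexivity. Qed.
Lemma opp_zeroX : opp (zero : X) = zero.
Proof. exact opp_zero. Qed.
End XL.

Definition lin {X : CompleteNormedModule C_AbsRing} (T : X -> X) : Prop :=
  (forall x y : X, T (plus x y) = plus (T x) (T y)) /\
  (forall (a : C) (x : X), T (scal a x) = scal a (T x)).

Lemma lin_zero {X : CompleteNormedModule C_AbsRing} (T : X -> X) :
  lin T -> T zero = zero.
Proof.
  intros [_ Hs]. rewrite <- (scal_zero_l (zero : X)) at 1.
  rewrite Hs. exact (scal_zero_l _).
Qed.

Lemma lin_opp {X : CompleteNormedModule C_AbsRing} (T : X -> X) :
  lin T -> forall x, T (opp x) = opp (T x).
Proof.
  intros [_ Hs] x.
  assert (E: forall y : X, opp y = scal (opp one : C_AbsRing) y)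
    by (intro; symmetry; exact (scal_opp_one _)).
  rewrite (E x), Hs, <- E. reflexivity.
Qed.

Lemma lin_iter {X : CompleteNormedModule C_AbsRing} (T : X -> X) :
  lin T -> forall n, lin (fun x => Nat.iter n T x).
Proof.
  intros [Hp Hs] n; induction n as [|n [IHp IHs]]; split; simpl; intros; auto.
  - rewrite IHp; auto.
  - rewrite IHs; auto.
Qed.

Lemma iter_comm {X : CompleteNormedModule C_AbsRing} (T R : X -> X) :
  (forall x, T (R x) = R (T x)) -> forall n x, Nat.iter n T (R x) = R (Nat.iter n T x).
Proof.
  intros H n; induction n; intros x; simpl; auto. rewrite IHn; auto.
Qed.

Lemma norm_scal_inv {X : CompleteNormedModule C_AbsRing} (a : C) (v : X) :
  a <> 0%C -> norm v <= / Cmod a * norm (scal a v).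
Proof.
  intros Ha.
  assert (E : scal (Cinv a) (scal a v) = v).
  { rewrite scal_assoc. replace (mult (Cinv a) a) with (one : C_AbsRing).
    exact (scal_one _). change (@eq C (RtoC 1) (Cmult (Cinv a) a)). field. auto. }
  pose proof (norm_scal (K:=C_AbsRing) (V:=X) (Cinv a) (scal a v)) as H.
  change (abs (Cinv a)) with (Cmod (Cinv a)) in H. rewrite Cmod_inv in H; auto.
  rewrite <- E at 1. exact H.
Qed.

Lemma chain {X : CompleteNormedModule C_AbsRing} (T R : X -> X) (d : C) :
  lin T -> (forall x, R x = plus (T x) (scal d (T (R x)))) ->
  forall j x, Nat.iter j T (R x) = plus (Nat.iter (S j) T x) (scal d (Nat.iter (S j) T (R x))).
Proof.
  intros HT HR j x. destruct (lin_iter T HT j) as [Hp Hs].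
  rewrite HR at 1. rewrite Hp, Hs. rewrite !Nat.iter_succ_r. reflexivity.
Qed.

Lemma derive_F {X : CompleteNormedModule C_AbsRing} (R T : X -> X) (l m : C) :
  l <> m ->
  (forall x, scal (Cinv (Cminus m l)) (minus (R x) (T x)) = R (T x)) ->
  (forall x, scal (Cinv (Cminus l m)) (minus (T x) (R x)) = T (R x)) ->
  (forall x, T (R x) = R (T x)) /\
  (forall x, R x = plus (T x) (scal (Cminus m l) (T (R x)))).
Proof.
  intros Hlm H1 H2.
  assert (Hd : Cminus m l <> 0%C).
  { intro E. apply Hlm. replace m with (Cplus (Cminus m l) l) by (unfold Cminus; ring).
    rewrite E; ring. }
  assert (Hd' : Cminus l m <> 0%C).
  { intro E. apply Hlm. replace l with (Cplus (Cminus l m) m) by (unfold Cminus; ring).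
    rewrite E; ring. }
  assert (Hc : forall x, T (R x) = R (T x)).
  { intro x. rewrite <- H1, <- H2. rewrite <- opp_minusX, scal_opp_rX.
    rewrite <- scal_opp_lX. replace (Copp (Cinv (Cminus l m))) with (Cinv (Cminus m l)). reflexivity.
    field. split; auto. }
  split; auto.
  intro x.
  assert (E : minus (R x) (T x) = scal (Cminus m l) (T (R x))).
  { rewrite Hc, <- H1, scal_assocX.
    replace (Cmult (Cminus m l) (Cinv (Cminus m l))) with (RtoC 1).
    symmetry. apply scal_oneX.
    change (@eq C (RtoC 1) (Cmult (Cminus m l) (Cinv (Cminus m l)))). field. auto. }
  rewrite <- E. rewrite minusX, plus_commX, <- plus_assocX.
  rewrite (plus_commX (opp (T x))), plus_opp_rX, plus_zero_rX. reflexivity.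
Qed.
Lemma norm_triangleX {X : CompleteNormedModule C_AbsRing} (u v : X) :
  norm (plus u v) <= norm u + norm v.
Proof. exact (norm_triangle _ _). Qed.
Lemma norm_oppX {X : CompleteNormedModule C_AbsRing} (u : X) : norm (opp u) = norm u.
Proof. exact (norm_opp _). Qed.
Lemma norm_ge_0X {X : CompleteNormedModule C_AbsRing} (u : X) : 0 <= norm u.
Proof. exact (norm_ge_0 _). Qed.

Fixpoint Kseq {X : CompleteNormedModule C_AbsRing} (T : X -> X) (x : X) (K0 : R) (j : nat) : R :=
  match j with
  | O => K0
  | S j' => 2 * (norm (Nat.iter (S j') T x) + Kseq T x K0 j')
  end.

Lemma bound_iter {X : CompleteNormedModule C_AbsRing} (T Q : X -> X) (d : C) (lam : R)
  (p : nat) (x : X) (K0 : R) :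
  lin T -> 1 <= lam -> lam / 2 <= Cmod d ->
  (forall y, Q y = plus (T y) (scal d (T (Q y)))) ->
  norm (Q x) <= K0 * lam ^ p / lam ->
  forall j, (j <= p)%nat -> norm (Nat.iter j T (Q x)) <= Kseq T x K0 j * lam ^ (p - j) / lam.
Proof.
  intros HT Hl Hd HF Hb j. induction j as [|j IH]; intros Hj.
  - simpl. rewrite Nat.sub_0_r. exact Hb.
  - assert (IH' := IH ltac:(lia)).
    assert (Hd0 : d <> 0%C).
    { intro E. rewrite E in Hd. rewrite Cmod_0 in Hd. lra. }
    pose proof (chain T Q d HT HF j x) as Ech.
    set (a := Nat.iter j T (Q x)) in *.
    set (b := Nat.iter (S j) T (Q x)) in *.
    set (t := Nat.iter (S j) T x) in *.
    assert (Es : scal d b = plus a (opp t)).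
    { rewrite Ech. rewrite (plus_commX t), <- plus_assocX, plus_opp_rX, plus_zero_rX.
      reflexivity. }
    pose proof (norm_scal_inv d b Hd0) as Hn.
    rewrite Es in Hn.
    pose proof (norm_triangleX a (opp t)) as Ht. rewrite norm_oppX in Ht.
    replace (p - j)%nat with (S (p - S j)) in IH' by lia.
    set (e := (p - S j)%nat) in *.
    simpl Kseq. fold t.
    set (K := Kseq T x K0 j) in *.
    simpl pow in IH'.
    assert (Hle : 1 <= lam ^ e) by (apply pow_R1_Rle; lra).
    assert (Ha : norm a <= K * lam ^ e).
    { replace (K * lam ^ e) with (K * (lam * lam ^ e) / lam) by (field; lra). exact IH'. }
    assert (Hn0 := norm_ge_0X t).
    assert (Hb0 := norm_ge_0X b).
    assert (Hpa := norm_ge_0X (plus a (opp t))).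
    assert (HS : norm (plus a (opp t)) <= K * lam ^ e + norm t * lam ^ e) by nra.
    assert (Hcm : 0 < Cmod d) by lra.
    assert (Hinv : / Cmod d <= 2 / lam).
    { apply Rle_trans with (/ (lam / 2)). apply Rinv_le_contravar; lra.
      right. field. lra. }
    assert (Hinv0 : 0 <= / Cmod d) by (left; apply Rinv_0_lt_compat; lra).
    apply Rle_trans with (/ Cmod d * norm (plus a (opp t))); [exact Hn|].
    apply Rle_trans with (2 / lam * (K * lam ^ e + norm t * lam ^ e)).
    + apply Rle_trans with (/ Cmod d * (K * lam ^ e + norm t * lam ^ e)).
      * apply Rmult_le_compat_l; auto.
      * apply Rmult_le_compat_r; [lra|exact Hinv].
    + right. replace (norm (T (Nat.iter j T x))) with (norm t) by reflexivity. field. lra.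
Qed.

Lemma ncl_mono {X : CompleteNormedModule C_AbsRing} (A B : X -> Prop) (x : X) :
  (forall y, A y -> B y) -> nclosure A x -> nclosure B x.
Proof.
  intros H Hx eps He. destruct (Hx eps He) as [y [Hy Hn]]. exists y; auto.
Qed.

Lemma ncl_self {X : CompleteNormedModule C_AbsRing} (A : X -> Prop) (x : X) :
  A x -> nclosure A x.
Proof.
  intros H eps He. exists x. split; auto.
  rewrite minusX, plus_opp_rX.
  assert (E : norm (zero : X) = 0) by exact (norm_zero (K:=C_AbsRing) (V:=X)).
  rewrite E. exact He.
Qed.

Lemma ncl_sub {X : CompleteNormedModule C_AbsRing} (A B : X -> Prop) (x : X) :
  (forall y, A y -> nclosure B y) -> nclosure A x -> nclosure B x.
Proof.
  intros H Hx eps He.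
  destruct (Hx (eps/2) ltac:(lra)) as [y [Hy Hn]].
  destruct (H y Hy (eps/2) ltac:(lra)) as [z [Hz Hn2]].
  exists z. split; auto.
  rewrite minusX in Hn, Hn2 |- *.
  assert (E : plus x (opp z) = plus (plus x (opp y)) (plus y (opp z))).
  { rewrite <- plus_assocX. f_equal.
    rewrite plus_assocX, (plus_commX (opp y)), plus_opp_rX, plus_zero_lX. reflexivity. }
  rewrite E. eapply Rle_lt_trans; [apply norm_triangleX|]. lra.
Qed.

Lemma powerRZ_fact (lam : R) (p : nat) :
  0 < lam -> powerRZ lam (2 - Z.of_nat (S p)) = lam / lam ^ p.
Proof.
  intros Hl.
  assert (Hp : 0 < lam ^ p) by (apply pow_lt; lra).
  assert (E : powerRZ lam (2 - Z.of_nat (S p)) * lam ^ p = lam).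
  { rewrite pow_powerRZ, <- powerRZ_add by lra.
    replace (2 - Z.of_nat (S p) + Z.of_nat p)%Z with 1%Z by lia. simpl. ring. }
  apply (Rmult_eq_reg_r (lam ^ p)); [|lra]. rewrite E. field. lra.
Qed.

Theorem mainTheorem4 (X : CompleteNormedModule C_AbsRing)
  (Omega : C -> Prop) (Rf : C -> X -> X) (k0 : nat) :
  open Omega ->
  pseudo_resolvent Omega Rf ->
  (1 <= k0)%nat ->
  cond_G Omega Rf k0 ->
  forall (mu : C) (k : nat), Omega mu -> (k0 <= k)%nat ->
    (forall x : X, op_ker (op_pow (Rf mu) (S k)) x <-> op_ker (op_pow (Rf mu) k0) x) /\
    (forall x : X, nclosure (op_ran (op_pow (Rf mu) (S k))) x <->
                   nclosure (op_ran (op_pow (Rf mu) k0)) x).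
Proof.
  intros _ [Hlin Hpr] Hk0 [M [lam [HM [HOm [Hpos [Hlim Hbd]]]]]] mu k Hmu Hk.
  destruct k0 as [|p]; [lia|].
  assert (HT : lin (Rf mu)).
  { destruct (Hlin mu Hmu) as [a [b _]]. split; auto. }
  set (T := Rf mu) in *.
  set (L := 2 * Cmod mu + 1).
  assert (HmuC := Cmod_ge_0 mu).
  assert (Hgood : forall n, L <= lam n ->
    lin (Rf (RtoC (lam n))) /\
    (forall y, T (Rf (RtoC (lam n)) y) = Rf (RtoC (lam n)) (T y)) /\
    (forall y, Rf (RtoC (lam n)) y =
       plus (T y) (scal (Cminus mu (RtoC (lam n))) (T (Rf (RtoC (lam n)) y)))) /\
    lam n / 2 <= Cmod (Cminus mu (RtoC (lam n)))).
  { intros n Hn.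
    assert (Hne : RtoC (lam n) <> mu).
    { intro E. assert (E2 : Cmod (RtoC (lam n)) = Cmod mu) by (rewrite E; auto).
      rewrite Cmod_R, Rabs_pos_eq in E2 by (left; apply Hpos). unfold L in Hn. lra. }
    destruct (derive_F (Rf (RtoC (lam n))) T (RtoC (lam n)) mu Hne
      (fun x => Hpr _ _ (HOm n) Hmu Hne x)
      (fun x => Hpr _ _ Hmu (HOm n) (not_eq_sym Hne) x)) as [Hc HF].
    split; [|split; [exact Hc|split; [exact HF|]]].
    - destruct (Hlin _ (HOm n)) as [a [b _]]. split; auto.
    - assert (E : RtoC (lam n) = Cplus mu (Copp (Cminus mu (RtoC (lam n))))).
      { unfold Cminus. ring. }
      assert (Ht := Cmod_triangle mu (Copp (Cminus mu (RtoC (lam n))))).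
      rewrite <- E, Cmod_opp, Cmod_R, Rabs_pos_eq in Ht by (left; apply Hpos).
      unfold L in Hn. lra. }
  assert (Key : forall x eps, 0 < eps -> exists n, L <= lam n /\
            norm (Nat.iter p T (Rf (RtoC (lam n)) x)) < eps).
  { intros x eps He.
    set (K := Kseq T x (M * norm x) p).
    assert (Hb : forall n, L <= lam n ->
               norm (Nat.iter p T (Rf (RtoC (lam n)) x)) <= K / lam n).
    { intros n Hn. destruct (Hgood n Hn) as [HQ [Hc [HF Hd]]].
      assert (Hl1 : 1 <= lam n) by (unfold L in Hn; lra).
      assert (Hpp : 0 < lam n ^ p) by (apply pow_lt; lra).
      assert (Hbase : norm (Rf (RtoC (lam n)) x) <= M * norm x * lam n ^ p / lam n).
      { pose proof (Hbd n x) as H. rewrite powerRZ_fact in H by apply Hpos.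
        set (r := lam n / lam n ^ p) in *.
        assert (Hr : 0 < r) by (unfold r; apply Rdiv_lt_0_compat; lra).
        assert (Ha : RtoC r <> 0%C).
        { intro E. assert (E2 : Cmod (RtoC r) = 0) by (rewrite E; apply Cmod_0).
          rewrite Cmod_R, Rabs_pos_eq in E2; lra. }
        pose proof (norm_scal_inv _ (Rf (RtoC (lam n)) x) Ha) as H2.
        rewrite Cmod_R, Rabs_pos_eq in H2 by lra.
        assert (Hir : / r = lam n ^ p / lam n) by (unfold r; field; lra).
        rewrite Hir in H2.
        assert (0 <= lam n ^ p / lam n) by (apply Rdiv_le_0_compat; lra).
        eapply Rle_trans; [exact H2|].
        replace (M * norm x * lam n ^ p / lam n) with (lam n ^ p / lam n * (M * norm x))
          by (field; lra).
        apply Rmult_le_compat_l; auto. }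
      pose proof (bound_iter T _ _ _ p x (M * norm x) HT Hl1 Hd HF Hbase p (le_n p)) as H.
      rewrite Nat.sub_diag in H. simpl pow in H. fold K in H.
      replace (K / lam n) with (K * 1 / lam n) by (field; lra). exact H. }
    apply is_lim_seq_spec in Hlim.
    destruct (Hlim (Rmax L (Rabs K / eps + 1))) as [N HN].
    specialize (HN N (le_n N)).
    apply Rmax_Rlt in HN. destruct HN as [HN1 HN2].
    exists N. split; [lra|].
    eapply Rle_lt_trans; [apply Hb; lra|].
    assert (HlN : 0 < lam N) by apply Hpos.
    assert (HKe : Rabs K / eps * eps = Rabs K) by (field; lra).
    assert (HK : K < eps * lam N).
    { assert (Hk1 := Rle_abs K). nra. }
    apply (Rmult_lt_reg_r (lam N)); auto.
    replace (K / lam N * lam N) with K by (field; lra). lra. }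
  assert (Setup : forall m x eps, (S p <= m)%nat -> 0 < eps ->
     exists n, L <= lam n /\
       norm (plus (Nat.iter m T x)
               (scal (Cminus mu (RtoC (lam n))) (Nat.iter m T (Rf (RtoC (lam n)) x)))) < eps).
  { intros m x eps Hm He.
    set (x' := Nat.iter (m - S p) T x).
    destruct (Key x' eps He) as [n [Hn Ha]].
    exists n. split; auto.
    destruct (Hgood n Hn) as [HQ [Hc [HF Hd]]].
    pose proof (chain T _ _ HT HF p x') as Ech.
    rewrite Ech in Ha.
    assert (E1 : Nat.iter (S p) T x' = Nat.iter m T x).
    { unfold x'. rewrite <- Nat.iter_add. f_equal. lia. }
    assert (E2 : Nat.iter (S p) T (Rf (RtoC (lam n)) x') = Nat.iter m T (Rf (RtoC (lam n)) x)).
    { unfold x'. rewrite <- iter_comm by exact Hc. rewrite <- Nat.iter_add. f_equal. lia. }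
    rewrite E1, E2 in Ha. exact Ha. }
  assert (HA : forall m x, (S p <= m)%nat ->
     nclosure (op_ran (op_pow T (S m))) (op_pow T m x)).
  { intros m x Hm eps He.
    destruct (Setup m x eps Hm He) as [n [Hn Ha]].
    destruct (Hgood n Hn) as [HQ [Hc [HF Hd]]].
    set (Q := Rf (RtoC (lam n))) in *.
    set (d := Cminus mu (RtoC (lam n))) in *.
    set (z := plus x (scal d (Q x))).
    assert (Ez : Q x = T z).
    { unfold z. destruct HT as [Tp Ts]. rewrite Tp, Ts. apply HF. }
    exists (Nat.iter (S m) T (opp (scal d z))). split.
    - exists (opp (scal d z)). reflexivity.
    - unfold op_pow.
      rewrite (lin_opp _ (lin_iter T HT (S m))).
      destruct (lin_iter T HT (S m)) as [_ Is]. rewrite Is.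
      rewrite Nat.iter_succ_r, <- Ez.
      rewrite minusX, opp_oppX. exact Ha. }
  assert (HB : forall m x, (S p <= m)%nat -> Nat.iter (S m) T x = zero ->
     Nat.iter m T x = zero).
  { intros m x Hm H0.
    set (w := Nat.iter m T x).
    assert (Hw : T w = zero) by exact H0.
    assert (Hsmall : forall eps, 0 < eps -> norm w < eps).
    { intros eps He.
      destruct (Setup m x eps Hm He) as [n [Hn Ha]].
      destruct (Hgood n Hn) as [HQ [Hc [HF Hd]]].
      rewrite iter_comm in Ha by exact Hc. fold w in Ha.
      rewrite HF, Hw, Hc, Hw, (lin_zero _ HQ), scal_zero_rX, plus_zero_lX in Ha.
      assert (Hz : forall (kk : C) (u : X), u = zero -> plus w (scal kk u) = w).
      { intros kk u ->. rewrite scal_zero_rX. exact (plus_zero_r _). }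
      rewrite Hz in Ha by reflexivity. exact Ha. }
    assert (Hn0 := norm_ge_0X w).
    destruct (Req_dec (norm w) 0) as [E|E].
    - exact (norm_eq_zero _ E).
    - assert (H1 := Hsmall (norm w) ltac:(lra)). lra. }
  split.
  - intro x. unfold op_ker, op_pow. split.
    + intro H.
      assert (Hdown : forall i, Nat.iter (S p + i) T x = zero -> Nat.iter (S p) T x = zero).
      { induction i as [|i IH]; intro Hi.
        - rewrite Nat.add_0_r in Hi. exact Hi.
        - apply IH. apply HB; [lia|].
          replace (S (S p + i)) with (S p + S i)%nat by lia. exact Hi. }
      apply (Hdown (S k - S p)%nat).
      replace (S p + (S k - S p))%nat with (S k) by lia. exact H.
    + intro H.
      replace (S k) with (S k - S p + S p)%nat by lia.
      rewrite Nat.iter_add, H. apply lin_zero. apply lin_iter. exact HT.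
  - intro x.
    assert (Hsub : forall m, (S p <= m)%nat -> forall y,
              op_ran (op_pow T m) y -> op_ran (op_pow T (S p)) y).
    { intros m Hm y [w Hw]. exists (Nat.iter (m - S p) T w).
      rewrite <- Hw. unfold op_pow. rewrite <- Nat.iter_add. f_equal. lia. }
    assert (Hup : forall i y, op_ran (op_pow T (S p)) y ->
              nclosure (op_ran (op_pow T (S p + i))) y).
    { induction i as [|i IH]; intros y Hy.
      - rewrite Nat.add_0_r. apply ncl_self. exact Hy.
      - apply (ncl_sub (op_ran (op_pow T (S p + i)))).
        + intros z [w <-]. replace (S p + S i)%nat with (S (S p + i)) by lia.
          apply HA. lia.
        + apply IH. exact Hy. }
    split.
    + apply ncl_mono. apply Hsub. lia.
    + apply ncl_sub. intros y Hy.
      replace (S k) with (S p + (S k - S p))%nat by lia. apply Hup. exact Hy.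
Qed.
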